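(* Let $T$ be a finite tile set, let $c\in\mathbb{N}$, and let $\tau_1,\tau_2,\dots$ be an infinite sequence of nondecreasing temperature functions such that for each $i$ the size-dependent system $(T,\tau_i)$ self-assembles a $k_i\times h_i$ rectangle with $h_i\le c$, where the widths $k_i$ are pairwise distinct. Let $f(n)=\min_{i\in\mathbb{N}}\tau_i(n)$. Then $f$ is bounded: there is a constant $C$ (e.g. $C=(c+1)g_{\max}$, with $g_{\max}$ the maximum glue strength in $T$) such that $f(n)\le C$ for all $n\in\mathbb{N}$.
   Context: Size-dependent two-handed tile assembly model. A tile type is a quadruple $(g_N,g_E,g_S,g_W)$ of glues from an alphabet $\Sigma$, each glue $g$ having a non-negative integer strength $\mathrm{str}(g)$. A tile is a unit square centered at a point of $\mathbb{Z}^2$ labeled by a tile type; two tiles are adjacent if their centers are at distance 1. An assembly is a partial map $\alpha:\mathbb{Z}^2\to T$ with finite domain $\mathrm{dom}(\alpha)$. Two adjacent tiles form a bond if the glues on their abutting edges are equal and of positive strength; the strength of the bond is that glue's strength. The bond graph of $\alpha$ has vertex set $\mathrm{dom}(\alpha)$ and an edge for each bond. A cut of an assembly is an edge cut of its bond graph (a partition of $\mathrm{dom}(\alpha)$ into two nonempty parts), and its strength is the total strength of bonds crossing it. A supertile $\tilde\alpha$ is the equivalence class of an assembly under translation; its size $|\tilde\alpha|$ is the number of tiles of an assembly in it. A size-dependent system is a pair $(T,\tau)$ with $T$ a finite tile set and $\tau:\mathbb{N}\to\mathbb{N}$ a nondecreasing temperature function. An assembly $\gamma$ is $\tau$-stable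 if every cut partitioning $\mathrm{dom}(\gamma)$ into parts $\alpha,\beta$ has strength at least $\tau(\min(|\alpha|,|\beta|))$. Two supertiles $\tilde\alpha,\tilde\beta$ can combine into $\tilde\gamma$ if there are disjoint assemblies $\alpha\in\tilde\alpha$, $\beta\in\tilde\beta$ with $\alpha\cup\beta=\gamma\in\tilde\gamma$ and the cut separating $\mathrm{dom}(\alpha)$ from $\mathrm{dom}(\beta)$ has strength at least $\tau(\min(|\alpha|,|\beta|))$. A supertile $\tilde\gamma$ can break into $\tilde\alpha,\tilde\beta$ if there are disjoint assemblies $\alpha\in\tilde\alpha,\beta\in\tilde\beta$ with connected bond graphs, $\alpha\cup\beta=\gamma\in\tilde\gamma$, and the cut separating them has strength less than $\tau(\min(|\alpha|,|\beta|))$. A supertile is producible if it is a single tile of a type in $T$, a combination of two producible supertiles, or a result of a break of a producible supertile. A producible supertile is terminal if it can combine with no producible supertile and cannot break. The system self-assembles a shape $P\subseteq\mathbb{Z}^2$ if every terminal supertile has an assembly whose domain is exactly $P$, and at least one terminal supertile exists. A $w\times h$ rectangle is a set $\{x+1,\dots,x+w\}\times\{y+1,\dots,y+h\}$ for some integers $x,y$. *)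

(* Defs.v *)
From Stdlib Require Import ZArith Arith List Relations Bool.
Import ListNotations.
Open Scope Z_scope.
Open Scope bool_scope.

(* Glues are labelled by natural numbers; a strength function str : nat -> nat
   assigns each glue its (non-negative integer) strength. *)
Record tiletype := mkTile { gN : nat; gE : nat; gS : nat; gW : nat }.

Definition pos := (Z * Z)%type.

(* An assembly: a partial map Z^2 -> tile types (finiteness of the domain is
   imposed where needed via [dom_list]). *)
Definition assembly := pos -> option tiletype.

Definition pos_eqb (p q : pos) : bool := Z.eqb (fst p) (fst q) && Z.eqb (snd p) (snd q).

Definition dom_list (a : assembly) (D : list pos) : Prop :=
  NoDup D /\ forall p, In p D <-> a p <> None.

Definition edge_str (str : nat -> nat) (a : assembly) (p q : pos) : nat :=
  match a p, a q with
  | Some t, Some u =>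
      if Z.eqb (fst q) (fst p + 1) && Z.eqb (snd q) (snd p) then
        (if Nat.eqb (gE t) (gW u) then str (gE t) else 0%nat)
      else if Z.eqb (fst q) (fst p) && Z.eqb (snd q) (snd p + 1) then
        (if Nat.eqb (gN t) (gS u) then str (gN t) else 0%nat)
      else 0%nat
  | _, _ => 0%nat
  end.

Definition bond_str (str : nat -> nat) (a : assembly) (p q : pos) : nat :=
  (edge_str str a p q + edge_str str a q p)%nat.

Definition bonded (str : nat -> nat) (a : assembly) (p q : pos) : Prop :=
  (0 < bond_str str a p q)%nat.

Definition connected (str : nat -> nat) (a : assembly) : Prop :=
  forall p q, a p <> None -> a q <> None ->
    clos_refl_trans pos (bonded str a) p q.

Definition cut_str (str : nat -> nat) (g : assembly) (Da Db : list pos) : nat :=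
  list_sum (map (fun p => list_sum (map (fun q => bond_str str g p q) Db)) Da).

Definition disjoint (a b : assembly) : Prop := forall p, a p = None \/ b p = None.

Definition is_union (a b g : assembly) : Prop :=
  forall p, g p = match a p with Some t => Some t | None => b p end.

Definition translate (a : assembly) (v : pos) (b : assembly) : Prop :=
  forall p, b p = a (fst p - fst v, snd p - snd v).

Definition can_combine (str : nat -> nat) (tau : nat -> nat)
  (alpha beta gamma : assembly) : Prop :=
  disjoint alpha beta /\ is_union alpha beta gamma /\
  exists Da Db, dom_list alpha Da /\ dom_list beta Db /\
    (tau (Nat.min (length Da) (length Db)) <= cut_str str gamma Da Db)%nat.

Definition can_break (str : nat -> nat) (tau : nat -> nat)
  (gamma alpha beta : assembly) : Prop :=
  disjoint alpha beta /\ is_union alpha beta gamma /\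
  connected str alpha /\ connected str beta /\
  exists Da Db, dom_list alpha Da /\ dom_list beta Db /\
    Da <> [] /\ Db <> [] /\
    (cut_str str gamma Da Db < tau (Nat.min (length Da) (length Db)))%nat.

(* producible assemblies: the set of all assemblies of producible supertiles
   (closed under translation, i.e. a union of translation classes) *)
Inductive producible (str : nat -> nat) (T : list tiletype) (tau : nat -> nat)
  : assembly -> Prop :=
| P_tile : forall t p0 a, In t T ->
    (forall p, a p = if pos_eqb p p0 then Some t else None) ->
    producible str T tau a
| P_trans : forall a v b, producible str T tau a -> translate a v b ->
    producible str T tau b
| P_combine : forall a b g, producible str T tau a -> producible str T tau b ->
    can_combine str tau a b g -> producible str T tau g
| P_break_l : forall g a b, producible str T tau g -> can_break str tau g a b ->
    producible str T tau a
| P_break_r : forall g a b, producible str T tau g -> can_break str tau g a b ->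
    producible str T tau b.

Definition terminal (str : nat -> nat) (T : list tiletype) (tau : nat -> nat)
  (g : assembly) : Prop :=
  producible str T tau g /\
  (forall v a, translate g v a ->
     forall b, producible str T tau b -> forall g', ~ can_combine str tau a b g') /\
  (forall v g', translate g v g' -> forall a b, ~ can_break str tau g' a b).

Definition self_assembles (str : nat -> nat) (T : list tiletype) (tau : nat -> nat)
  (P : pos -> Prop) : Prop :=
  (forall g, terminal str T tau g ->
     exists v g', translate g v g' /\ forall p, g' p <> None <-> P p) /\
  (exists g, terminal str T tau g).

Definition rect (x y : Z) (w h : nat) (p : pos) : Prop :=
  x + 1 <= fst p <= x + Z.of_nat w /\ y + 1 <= snd p <= y + Z.of_nat h.

Definition self_assembles_rect (str : nat -> nat) (T : list tiletype)
  (tau : nat -> nat) (w h : nat) : Prop :=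
  exists x y, self_assembles str T tau (rect x y w h).

Definition nondecreasing (f : nat -> nat) : Prop :=
  forall m n, (m <= n)%nat -> (f m <= f n)%nat.

Definition is_min_value (g : nat -> nat) (m : nat) : Prop :=
  (exists i, g i = m) /\ forall i, (m <= g i)%nat.

(* Main.v *)
Require Import Defs.
From Stdlib Require Import ZArith Arith List Relations Lia Bool FinFun Classical ClassicalEpsilon.
Import ListNotations.

Lemma pos_eq_dec : forall p q : pos, {p = q} + {p <> q}.
Proof. intros [a b] [c d]. destruct (Z.eq_dec a c), (Z.eq_dec b d); subst; auto;
  right; intro H; inversion H; auto. Qed.

Lemma pos_eqb_spec p q : pos_eqb p q = true <-> p = q.
Proof. destruct p as [a b], q as [c d]; unfold pos_eqb; simpl.
  rewrite andb_true_iff, !Z.eqb_eq. split; [intros [-> ->]; auto| intro H; inversion H; auto]. Qed.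

Lemma bond_local str a b p q : a p = b p -> a q = b q -> bond_str str a p q = bond_str str b p q.
Proof. intros H1 H2. unfold bond_str, edge_str. rewrite H1, H2. reflexivity. Qed.

Lemma bond_sym str a p q : bond_str str a p q = bond_str str a q p.
Proof. unfold bond_str. lia. Qed.

Lemma edge_some str a p q : (0 < edge_str str a p q)%nat -> a p <> None /\ a q <> None.
Proof. unfold edge_str. destruct (a p), (a q); simpl; intros; try lia; split; discriminate. Qed.

Lemma bonded_some str a p q : bonded str a p q -> a p <> None /\ a q <> None.
Proof. unfold bonded, bond_str. intro H.
  destruct (Nat.eq_dec (edge_str str a p q) 0).
  - assert (0 < edge_str str a q p)%nat by lia. destruct (edge_some _ _ _ _ H0). tauto.
  - apply (edge_some str). lia. Qed.

Lemma edge_adj str a p q : (0 < edge_str str a p q)%nat ->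
  (fst q = fst p + 1 /\ snd q = snd p) \/ fst q = fst p.
Proof. unfold edge_str. destruct (a p), (a q); try lia.
  destruct (Z.eqb_spec (fst q) (fst p + 1)), (Z.eqb_spec (snd q) (snd p)); simpl; auto;
  destruct (Z.eqb_spec (fst q) (fst p)); simpl; auto; intros; lia. Qed.

Lemma bonded_adj str a p q : bonded str a p q ->
  (fst q = fst p + 1 /\ snd q = snd p) \/ (fst p = fst q + 1 /\ snd p = snd q) \/ fst q = fst p.
Proof. unfold bonded, bond_str. intro H.
  destruct (Nat.eq_dec (edge_str str a p q) 0).
  - assert (0 < edge_str str a q p)%nat by lia. pose proof (edge_adj _ _ _ _ H0). lia.
  - pose proof (edge_adj str a p q). lia. Qed.

Lemma bonded_sym str a p q : bonded str a p q -> bonded str a q p.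
Proof. unfold bonded. rewrite bond_sym. auto. Qed.

Lemma crt_sym {A} (R : relation A) : (forall x y, R x y -> R y x) ->
  forall x y, clos_refl_trans A R x y -> clos_refl_trans A R y x.
Proof. intros HS x y H. induction H. apply rt_step; auto. apply rt_refl. eapply rt_trans; eauto. Qed.

Lemma crt_mono {A} (R R' : relation A) : (forall x y, R x y -> R' x y) ->
  forall x y, clos_refl_trans A R x y -> clos_refl_trans A R' x y.
Proof. intros HS x y H. induction H. apply rt_step; auto. apply rt_refl. eapply rt_trans; eauto. Qed.

Lemma exit_lemma {A} (R : relation A) (P : A -> Prop) x y :
  clos_refl_trans A R x y -> P x -> ~ P y -> exists u w, P u /\ ~ P w /\ R u w.
Proof. intro H. apply clos_rt_rt1n in H. induction H; intros.
  - contradiction.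
  - destruct (classic (P y)). apply IHclos_refl_trans_1n; auto. exists x, y; auto. Qed.

Definition psub (p v : pos) : pos := (fst p - fst v, snd p - snd v).
Definition padd (p v : pos) : pos := (fst p + fst v, snd p + snd v).

Lemma trans_at a v b p : translate a v b -> b p = a (psub p v).
Proof. intro H. apply H. Qed.

Lemma edge_trans str a v b p q : translate a v b ->
  edge_str str b p q = edge_str str a (psub p v) (psub q v).
Proof. intro Ht. unfold edge_str. rewrite !Ht. unfold psub; simpl.
  destruct (a (fst p - fst v, snd p - snd v)), (a (fst q - fst v, snd q - snd v)); auto.
  destruct (Z.eqb_spec (fst q) (fst p + 1)), (Z.eqb_spec (snd q) (snd p));
  destruct (Z.eqb_spec (fst q - fst v) (fst p - fst v + 1)), (Z.eqb_spec (snd q - snd v) (snd p - snd v));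
  simpl; try lia;
  destruct (Z.eqb_spec (fst q) (fst p)), (Z.eqb_spec (snd q) (snd p + 1));
  destruct (Z.eqb_spec (fst q - fst v) (fst p - fst v)), (Z.eqb_spec (snd q - snd v) (snd p - snd v + 1));
  simpl; try lia; auto. Qed.

Lemma bond_trans str a v b p q : translate a v b ->
  bond_str str b p q = bond_str str a (psub p v) (psub q v).
Proof. intro Ht. unfold bond_str. rewrite !(edge_trans str a v b); auto. Qed.

Lemma psub_padd p v : psub (padd p v) v = p.
Proof. destruct p, v; unfold psub, padd; simpl; f_equal; lia. Qed.
Lemma padd_psub p v : padd (psub p v) v = p.
Proof. destruct p, v; unfold psub, padd; simpl; f_equal; lia. Qed.

Lemma connected_trans str a v b : translate a v b -> connected str a -> connected str b.
Proof. intros Ht Hc p q Hp Hq.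
  assert (Hp' : a (psub p v) <> None) by (rewrite <- (trans_at a v b); auto).
  assert (Hq' : a (psub q v) <> None) by (rewrite <- (trans_at a v b); auto).
  pose proof (Hc _ _ Hp' Hq') as H. rewrite <- (padd_psub p v), <- (padd_psub q v).
  clear Hp' Hq' Hp Hq. induction H.
  - apply rt_step. unfold bonded in *. rewrite (bond_trans str a v b); auto. rewrite !psub_padd; auto.
  - apply rt_refl.
  - eapply rt_trans; eauto. Qed.



Lemma union_some a b g p : is_union a b g -> a p <> None -> g p = a p.
Proof. intros H Hp. rewrite H. destruct (a p); congruence. Qed.

Lemma union_some_r a b g p : disjoint a b -> is_union a b g -> b p <> None -> g p = b p.
Proof. intros Hd H Hp. rewrite H. destruct (Hd p) as [E|E]; [rewrite E; auto| congruence]. Qed.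

Lemma union_none a b g p : is_union a b g -> g p <> None -> a p <> None \/ b p <> None.
Proof. intros H. rewrite H. destruct (a p); auto. Qed.

Lemma dom_in a D p : dom_list a D -> a p <> None -> In p D.
Proof. intros [_ H] Hp. apply H. auto. Qed.

Lemma prod_nonempty str T tau a : producible str T tau a -> exists p, a p <> None.
Proof. induction 1.
  - exists p0. rewrite H0. replace (pos_eqb p0 p0) with true. discriminate.
    symmetry. apply pos_eqb_spec. auto.
  - destruct IHproducible as [p Hp]. exists (padd p v). rewrite (trans_at a v b); auto.
    rewrite psub_padd. auto.
  - destruct IHproducible1 as [p Hp]. exists p. rewrite (union_some a b g p); auto. apply H1.
  - destruct H0 as (_&_&_&_&Da&Db&[_ HDa]&_&Hne&_). destruct Da as [|p]; [congruence|].
    exists p. apply HDa. simpl; auto.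
  - destruct H0 as (_&_&_&_&Da&Db&_&[_ HDb]&_&Hne&_). destruct Db as [|p]; [congruence|].
    exists p. apply HDb. simpl; auto.
Qed.

Lemma prod_tiles str T tau a : producible str T tau a -> forall p t, a p = Some t -> In t T.
Proof. induction 1; intros q u Hq.
  - rewrite H0 in Hq. destruct (pos_eqb q p0); inversion Hq; subst; auto.
  - rewrite (trans_at a v b) in Hq; eauto.
  - destruct H1 as (Hd&Hu&_). rewrite Hu in Hq. destruct (a q) eqn:E.
    + inversion Hq; subst; eauto.
    + eauto.
  - destruct H0 as (Hd&Hu&_). apply (IHproducible q). rewrite (union_some a b g q); auto. congruence.
  - destruct H0 as (Hd&Hu&_). apply (IHproducible q). rewrite (union_some_r a b g q); auto. congruence.
Qed.

Lemma lift_path str a g : (forall p, a p <> None -> g p = a p) ->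
  forall x y, clos_refl_trans pos (bonded str a) x y -> clos_refl_trans pos (bonded str g) x y.
Proof. intros H. apply crt_mono. intros x y Hb. unfold bonded in *.
  destruct (bonded_some _ _ _ _ Hb). rewrite (bond_local str g a); auto. Qed.

Lemma cut_pos str g Da Db : (0 < cut_str str g Da Db)%nat ->
  exists p q, In p Da /\ In q Db /\ bonded str g p q.
Proof. unfold cut_str. induction Da as [|p Da IH]; simpl; [lia|]. intro H.
  destruct (Nat.eq_dec (list_sum (map (fun q => bond_str str g p q) Db)) 0) as [E|E].
  - destruct IH as (p'&q&?&?&?); [lia|]. exists p', q; auto.
  - clear IH H. induction Db as [|q Db IH]; simpl in *; [lia|].
    destruct (Nat.eq_dec (bond_str str g p q) 0).
    + destruct IH as (p'&q'&?&?&?); [lia|]. exists p', q'; intuition.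
    + exists p, q. unfold bonded. intuition lia.
Qed.

Lemma prod_conn str T tau a : nondecreasing tau -> (0 < tau 1)%nat ->
  producible str T tau a -> connected str a.
Proof. intros Hnd Ht1. induction 1.
  - intros p q Hp Hq. rewrite H0 in Hp, Hq.
    destruct (pos_eqb p p0) eqn:E1; [|congruence]. destruct (pos_eqb q p0) eqn:E2; [|congruence].
    apply pos_eqb_spec in E1, E2. subst. apply rt_refl.
  - eapply connected_trans; eauto.
  - destruct H1 as (Hd&Hu0&Da&Db&HDa&HDb&Hcut).
    destruct (prod_nonempty _ _ _ _ H) as [pa Hpa]. destruct (prod_nonempty _ _ _ _ H0) as [pb Hpb].
    assert (La : (1 <= length Da)%nat). { destruct Da; [|simpl; lia]. exfalso. eapply (dom_in a []); eauto. }
    assert (Lb : (1 <= length Db)%nat). { destruct Db; [|simpl; lia]. exfalso. eapply (dom_in b []); eauto. }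
    assert (Hc : (0 < cut_str str g Da Db)%nat).
    { pose proof (Hnd 1%nat (Nat.min (length Da) (length Db)) ltac:(lia)). lia. }
    destruct (cut_pos _ _ _ _ Hc) as (p&q&Hp&Hq&Hpq).
    assert (Ha : forall u, a u <> None -> g u = a u) by (intros; eapply union_some; eauto).
    assert (Hb : forall u, b u <> None -> g u = b u) by (intros; eapply union_some_r; eauto).
    assert (Hpa' : a p <> None) by (apply HDa; auto).
    assert (Hqb : b q <> None) by (apply HDb; auto).
    assert (Hsym : forall x y, bonded str g x y -> bonded str g y x) by (intros; apply bonded_sym; auto).
    assert (Reach : forall u, g u <> None -> clos_refl_trans pos (bonded str g) u p).
    { intros u Hu. destruct (union_none _ _ _ u Hu0 Hu) as [Hau|Hbu].
      - apply (lift_path str a g Ha). apply IHproducible1; auto.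
      - eapply rt_trans. apply (lift_path str b g Hb). apply IHproducible2. exact Hbu. exact Hqb.
        apply rt_step. apply Hsym. auto. }
    intros u w Hu Hw. eapply rt_trans. apply Reach; auto. apply crt_sym; auto.
  - destruct H0 as (_&_&Hc&_). auto.
  - destruct H0 as (_&_&_&Hc&_). auto.
Qed.

Definition col (x y : Z) (a h : nat) : list pos :=
  map (fun b => (x + Z.of_nat a, y + Z.of_nat b)) (seq 1 h).
Definition rect_list (x y : Z) (k h : nat) : list pos :=
  flat_map (fun a => col x y a h) (seq 1 k).

Lemma in_col x y a h p : In p (col x y a h) <-> fst p = x + Z.of_nat a /\ y + 1 <= snd p <= y + Z.of_nat h.
Proof. unfold col. rewrite in_map_iff. split.
  - intros [b [<- Hb]]. apply in_seq in Hb. simpl. lia.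
  - destruct p as [p1 p2]; simpl. intros [-> Hb]. exists (Z.to_nat (p2 - y)).
    rewrite in_seq. split; [f_equal; lia | lia]. Qed.

Lemma length_col x y a h : length (col x y a h) = h.
Proof. unfold col. rewrite length_map, length_seq. auto. Qed.

Lemma nodup_col x y a h : NoDup (col x y a h).
Proof. unfold col. apply Injective_map_NoDup; [|apply seq_NoDup].
  intros b1 b2 E. inversion E. lia. Qed.

Lemma in_rect_list x y k h p : In p (rect_list x y k h) <-> rect x y k h p.
Proof. unfold rect_list, rect. rewrite in_flat_map. split.
  - intros [a [Ha Hp]]. apply in_seq in Ha. apply in_col in Hp. lia.
  - intros H. exists (Z.to_nat (fst p - x)). rewrite in_seq, in_col. lia. Qed.

Lemma length_rect_list x y k h : length (rect_list x y k h) = (k * h)%nat.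
Proof. unfold rect_list. rewrite (flat_map_constant_length (c:=h)).
  rewrite length_seq; auto. intros; apply length_col. Qed.

Lemma nodup_rect_list x y k h : NoDup (rect_list x y k h).
Proof. unfold rect_list. generalize (seq_NoDup k 1). generalize (seq 1 k) as l.
  induction l as [|a l IH]; simpl; intro Hn. constructor.
  inversion Hn; subst. apply NoDup_app; auto using nodup_col.
  intros p Hp Hp'. apply in_col in Hp. apply in_flat_map in Hp'. destruct Hp' as [a' [Ha' Hp']].
  apply in_col in Hp'. assert (a = a') by lia. subst. auto. Qed.

Lemma dom_rect (g : assembly) x y k h : (forall p, g p <> None <-> rect x y k h p) ->
  dom_list g (rect_list x y k h).
Proof. intros H. split. apply nodup_rect_list. intro p. rewrite in_rect_list, H. tauto. Qed.

Lemma sum_support (f : pos -> nat) (l W : list pos) (M : nat) : NoDup l ->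
  (forall p, In p l -> (f p <= M)%nat) -> (forall p, In p l -> f p <> 0%nat -> In p W) ->
  (list_sum (map f l) <= length W * M)%nat.
Proof. revert W. induction l as [|a l IH]; intros W Hn Hb Hs; simpl. lia.
  inversion Hn; subst.
  destruct (Nat.eq_dec (f a) 0) as [E|E].
  - rewrite E. simpl. apply IH; auto with datatypes.
  - assert (Ha : In a W) by auto with datatypes.
    pose proof (remove_length_lt pos_eq_dec W a Ha).
    assert (list_sum (map f l) <= length (remove pos_eq_dec a W) * M)%nat.
    { apply IH; auto with datatypes. intros p Hp Hf. apply in_in_remove.
      intro; subst; auto. auto with datatypes. }
    assert (f a <= M)%nat by auto with datatypes. nia. Qed.

Lemma pigeon (S W : list pos) (comp : pos -> list pos) (m : nat) : NoDup S ->
  (forall s, In s S -> exists w, In w W /\ In s (comp w)) -> (length W * m < length S)%nat ->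
  exists w, In w W /\ (m < length (comp w))%nat.
Proof. intros Hn Hc Hl. apply NNPP. intro Hno.
  assert (Hall : forall w, In w W -> (length (comp w) <= m)%nat).
  { intros w Hw. destruct (le_lt_dec (length (comp w)) m); auto. exfalso; eauto. }
  assert (incl S (flat_map comp W)).
  { intros s Hs. destruct (Hc s Hs) as [w [Hw Hsw]]. apply in_flat_map. eauto. }
  pose proof (NoDup_incl_length Hn H).
  assert (length (flat_map comp W) <= length W * m)%nat.
  { clear -Hall. induction W; simpl; auto. rewrite length_app.
    pose proof (Hall a (or_introl eq_refl)). assert (length (flat_map comp W) <= length W * m)%nat.
    apply IHW. intros; apply Hall; simpl; auto. lia. }
  lia. Qed.

Lemma inj_unbounded (k : nat -> nat) : (forall i j, i <> j -> k i <> k j) ->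
  forall M, exists i, (M <= k i)%nat.
Proof. intros Hk M. apply NNPP. intro H.
  assert (Hlt : forall i, (k i < M)%nat). { intro i. destruct (le_lt_dec M (k i)); auto. exfalso; eauto. }
  assert (NoDup (map k (seq 0 (S M)))).
  { apply Injective_map_NoDup; [|apply seq_NoDup]. intros i j E.
    destruct (Nat.eq_dec i j); auto. exfalso; eapply Hk; eauto. }
  assert (incl (map k (seq 0 (S M))) (seq 0 M)).
  { intros z Hz. apply in_map_iff in Hz. destruct Hz as [i [<- _]]. apply in_seq. specialize (Hlt i). lia. }
  pose proof (NoDup_incl_length H0 H1). rewrite length_map, !length_seq in H2. lia. Qed.

Definition decP (P : Prop) : bool := if excluded_middle_informative P then true else false.
Lemma decP_spec P : decP P = true <-> P.
Proof. unfold decP. destruct (excluded_middle_informative P); split; auto; discriminate. Qed.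

Definition Rel str (g : assembly) (S : list pos) (p q : pos) : Prop :=
  In p S /\ In q S /\ bonded str g p q.
Definition reach str g S := clos_refl_trans pos (Rel str g S).
Definition restr (g : assembly) (S : list pos) : assembly :=
  fun p => if in_dec pos_eq_dec p S then g p else None.
Definition comp str g (S V : list pos) (w : pos) : list pos :=
  filter (fun p => decP (In w S /\ reach str g S w p)) V.

Lemma in_comp str g S V w p : In p (comp str g S V w) <-> In p V /\ In w S /\ reach str g S w p.
Proof. unfold comp. rewrite filter_In, decP_spec. tauto. Qed.

Lemma reach_sym str g S u v : reach str g S u v -> reach str g S v u.
Proof. apply crt_sym. intros x y (?&?&?). split; [|split]; auto. apply bonded_sym; auto. Qed.

Lemma reach_in str g S u v : reach str g S u v -> In u S -> In v S.
Proof. intros H. apply clos_rt_rtn1 in H. induction H; auto. destruct H as (?&?&?); auto. Qed.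

Lemma reach_restrict str g S S' u z : In u S' -> reach str g S u z ->
  (forall w, reach str g S u w -> In w S -> In w S') -> reach str g S' u z.
Proof. intros Hu H Hw. unfold reach in *. apply clos_rt_rtn1 in H. induction H.
  - apply rt_refl.
  - assert (reach str g S u y) by (apply clos_rtn1_rt; auto).
    assert (reach str g S u z) by (eapply rt_trans; [apply H1| apply rt_step; auto]).
    destruct H as (Hy&Hz&Hb). eapply rt_trans. apply IHclos_refl_trans_n1.
    apply rt_step. split; [apply Hw; auto|split; [apply Hw; auto|auto]]. Qed.

Lemma restr_at g S p : In p S -> restr g S p = g p.
Proof. unfold restr. destruct (in_dec pos_eq_dec p S); tauto. Qed.
Lemma restr_out g S p : ~ In p S -> restr g S p = None.
Proof. unfold restr. destruct (in_dec pos_eq_dec p S); tauto. Qed.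

Lemma reach_restr str g S u v : reach str g S u v -> clos_refl_trans pos (bonded str (restr g S)) u v.
Proof. apply crt_mono. intros x y (Hx&Hy&Hb). unfold bonded in *.
  rewrite (bond_local str (restr g S) g); auto using restr_at. Qed.

Lemma sum_nonzero (f : pos -> nat) l : list_sum (map f l) <> 0%nat -> exists x, In x l /\ f x <> 0%nat.
Proof. induction l; simpl; intros H. lia.
  destruct (Nat.eq_dec (f a) 0); [destruct IHl as [z [? ?]]; [lia|exists z; auto] | exists a; auto]. Qed.

Definition gmax str (T : list tiletype) : nat :=
  list_sum (map (fun t => str (gN t) + str (gE t) + str (gS t) + str (gW t))%nat T).

Lemma gmax_ge str T t : In t T -> (str (gN t) + str (gE t) + str (gS t) + str (gW t) <= gmax str T)%nat.
Proof. unfold gmax. induction T; simpl; intros H; [contradiction|]. destruct H; subst; [lia|].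
  specialize (IHT H). lia. Qed.

Lemma edge_le str T g p q : (forall p t, g p = Some t -> In t T) -> (edge_str str g p q <= gmax str T)%nat.
Proof. intros HT. unfold edge_str. destruct (g p) eqn:E1, (g q) eqn:E2; try lia.
  pose proof (gmax_ge str T t (HT _ _ E1)).
  destruct (_ && _); [destruct (Nat.eqb _ _); lia|]. destruct (_ && _); [destruct (Nat.eqb _ _); lia|]. lia. Qed.

Lemma bond_le str T g p q : (forall p t, g p = Some t -> In t T) -> (bond_str str g p q <= 2 * gmax str T)%nat.
Proof. intros HT. unfold bond_str. pose proof (edge_le str T g p q HT). pose proof (edge_le str T g q p HT). lia. Qed.

Lemma len_in (l : list pos) n : (n < length l)%nat -> exists z, In z l.
Proof. destruct l as [|z l]; simpl; intros; [lia|exists z; auto]. Qed.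

Lemma main_break str T tau (g : assembly) x y k h n c :
  (forall p, g p <> None <-> rect x y k h p) -> connected str g ->
  (forall p t, g p = Some t -> In t T) -> (1 <= h <= c)%nat -> (2*n+2 <= k)%nat ->
  nondecreasing tau -> (c * (2 * gmax str T) < tau n)%nat ->
  exists a b, can_break str tau g a b.
Proof.
  intros Hdom Hconn HT Hh Hk Hnd Htau.
  set (j := S n).
  set (V := rect_list x y k h).
  set (Lset := rect_list x y j h).
  set (Rset := rect_list (x + Z.of_nat j) y (k - j) h).
  assert (inV : forall p, In p V <-> g p <> None).
  { intro p. unfold V. rewrite in_rect_list, Hdom. tauto. }
  assert (inL : forall p, In p Lset <-> In p V /\ fst p <= x + Z.of_nat j).
  { intro p. unfold Lset, V. rewrite !in_rect_list. unfold rect. lia. }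
  assert (inR : forall p, In p Rset <-> In p V /\ fst p > x + Z.of_nat j).
  { intro p. unfold Rset, V. rewrite !in_rect_list. unfold rect. lia. }
  assert (bV : forall p q, bonded str g p q -> In p V /\ In q V).
  { intros p q Hb. destruct (bonded_some _ _ _ _ Hb). rewrite !inV. auto. }
  assert (cross : forall p q, bonded str g p q -> In p Lset -> In q V -> ~ In q Lset ->
             In p (col x y j h) /\ q = (fst p + 1, snd p)).
  { intros p q Hb Hp Hq Hq'. rewrite inL in Hp. rewrite inL in Hq'.
    pose proof (bonded_adj _ _ _ _ Hb).
    assert (Hp' := proj1 Hp). rewrite inV, Hdom in Hp'.
    assert (fst q > x + Z.of_nat j) by tauto. unfold rect in Hp'.
    rewrite in_col. destruct q as [q1 q2]; simpl in *. split. lia. f_equal; lia. }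
  assert (nodV : NoDup V) by apply nodup_rect_list.
  destruct (pigeon Lset (col x y j h) (comp str g Lset V) n) as [r [Hr HA]].
  { apply nodup_rect_list. }
  { intros s Hs.
    set (t := (x + Z.of_nat k, y + 1)).
    assert (Ht : In t V). { apply inV, Hdom. unfold rect, t; simpl. lia. }
    assert (Ht' : ~ In t Lset). { rewrite inL. unfold t; simpl. lia. }
    assert (Hs' : In s V) by (apply inL; auto).
    pose proof (Hconn s t (proj1 (inV s) Hs') (proj1 (inV t) Ht)) as Hpath.
    destruct (exit_lemma _ (reach str g Lset s) _ _ Hpath) as (u&w'&Hu&Hw'&Hb).
    { apply rt_refl. }
    { intro Hr. apply Ht'. eapply reach_in; eauto. }
    assert (HuL : In u Lset) by (eapply reach_in; eauto).
    assert (Hw'L : ~ In w' Lset).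
    { intro Hw''. apply Hw'. eapply rt_trans. apply Hu. apply rt_step. split; auto. }
    destruct (cross u w' Hb HuL (proj2 (bV _ _ Hb)) Hw'L) as [Hucol _].
    exists u. split; auto. apply in_comp. split; auto. split; auto. apply reach_sym; auto. }
  { rewrite length_col. unfold Lset. rewrite length_rect_list. unfold j. nia. }
  set (A := comp str g Lset V r).
  assert (HrL : In r Lset). { apply in_rect_list. apply in_col in Hr. unfold rect. unfold j in *. lia. }
  assert (inA : forall p, In p A <-> In p V /\ reach str g Lset r p).
  { intro p. unfold A. rewrite in_comp. split; [intros (?&?&?); auto | intros (?&?); repeat split; auto]. }
  assert (AL : forall p, In p A -> In p Lset). { intros p Hp. apply inA in Hp. eapply reach_in; eauto. apply Hp. }
  assert (rV : In r V) by (apply inL; auto).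
  assert (rA : In r A) by (apply inA; split; auto; apply rt_refl).
  set (B := filter (fun p => negb (decP (In p A))) V).
  assert (inB : forall p, In p B <-> In p V /\ ~ In p A).
  { intro p. unfold B. rewrite filter_In. destruct (decP (In p A)) eqn:E; simpl.
    - rewrite decP_spec in E. split; [intros [_ F]; discriminate | intros [_ F]; exfalso; exact (F E)].
    - split; intros [? ?]; split; auto. intro Hc. rewrite <- decP_spec in Hc. congruence. }
  destruct (pigeon Rset (col x y (S j) h) (comp str g B V) n) as [w0 [Hw0 HBm]].
  { apply nodup_rect_list. }
  { intros s Hs. apply inR in Hs. destruct Hs as [HsV Hsx].
    assert (HsB : In s B). { apply inB. split; auto. intro HA'. apply AL, inL in HA'. lia. }
    pose proof (Hconn s r (proj1 (inV s) HsV) (proj1 (inV r) rV)) as Hpath.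
    destruct (exit_lemma _ (reach str g B s) _ _ Hpath) as (u&w'&Hu&Hw'&Hb).
    { apply rt_refl. }
    { intro Hr'. apply (reach_in _ _ _ _ _ Hr') in HsB. apply inB in HsB. tauto. }
    assert (HuB : In u B) by (eapply reach_in; eauto).
    assert (Hw'V : In w' V) by (apply (bV _ _ Hb)).
    assert (Hw'A : In w' A).
    { apply NNPP. intro Hn. apply Hw'. eapply rt_trans. apply Hu. apply rt_step.
      split; auto. split; auto. apply inB; auto. }
    assert (HuL : ~ In u Lset).
    { intro HuL. pose proof (proj1 (inB u) HuB) as [HuV HuA]. apply HuA. apply inA. split; auto.
      eapply rt_trans. apply (proj1 (inA w') Hw'A). apply rt_step. split; [apply AL; auto|split; auto].
      apply bonded_sym; auto. }
    destruct (cross w' u (bonded_sym _ _ _ _ Hb) (AL _ Hw'A) (proj1 (proj1 (inB u) HuB)) HuL) as [Hwcol Heq].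
    exists u. split.
    - apply in_col in Hwcol. apply in_col. rewrite Heq. simpl. lia.
    - apply in_comp. split; auto. split; auto. apply reach_sym; auto. }
  { rewrite length_col. unfold Rset. rewrite length_rect_list. unfold j in *. nia. }
  set (Bm := comp str g B V w0).
  assert (inBm : forall p, In p Bm <-> In p V /\ In w0 B /\ reach str g B w0 p).
  { intro p. unfold Bm. rewrite in_comp. tauto. }
  assert (w0B : In w0 B).
  { destruct (len_in Bm n HBm) as [z Hz]. apply inBm in Hz. tauto. }
  assert (BmB : forall p, In p Bm -> In p B).
  { intros p Hp. apply inBm in Hp. destruct Hp as (_&_&Hp). eapply reach_in; eauto. }
  set (A' := filter (fun p => negb (decP (In p Bm))) V).
  assert (inA' : forall p, In p A' <-> In p V /\ ~ In p Bm).
  { intro p. unfold A'. rewrite filter_In. destruct (decP (In p Bm)) eqn:E; simpl.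
    - rewrite decP_spec in E. split; [intros [_ F]; discriminate | intros [_ F]; exfalso; exact (F E)].
    - split; intros [? ?]; split; auto. intro Hc. rewrite <- decP_spec in Hc. congruence. }
  assert (AA' : forall p, In p A -> In p A').
  { intros p Hp. apply inA'. split. apply inA; auto. intro Hb. apply BmB, inB in Hb. tauto. }
  assert (LA' : (n < length A')%nat).
  { eapply Nat.lt_le_trans. apply HA. apply NoDup_incl_length.
    unfold A, comp. apply NoDup_filter; auto. intros p Hp. apply AA'; auto. }
  assert (key : forall p q, In p A' -> In q Bm -> bonded str g p q ->
             In p (col x y j h) /\ q = (fst p + 1, snd p)).
  { intros p q Hp Hq Hb. apply inA' in Hp. destruct Hp as [HpV HpBm].
    assert (HpA : In p A).
    { apply NNPP. intro Hn. apply HpBm. apply inBm. apply inBm in Hq. destruct Hq as (?&?&Hq).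
      split; auto. split; auto. eapply rt_trans. apply Hq. apply rt_step.
      split. eapply reach_in; eauto. split. apply inB; auto. apply bonded_sym; auto. }
    assert (HqB := BmB _ Hq). apply inB in HqB.
    apply cross; [exact Hb | apply AL; exact HpA | tauto | ].
    intro HqL. apply (proj2 HqB). apply inA. split. tauto. eapply rt_trans. apply (proj2 (proj1 (inA p) HpA)).
    apply rt_step. split. apply AL; auto. split; auto. }
  exists (restr g A'), (restr g Bm).
  split; [|split; [|split; [|split]]].
  - intro p. destruct (in_dec pos_eq_dec p A') as [H|H].
    + right. apply restr_out. intro H'. apply inA' in H. tauto.
    + left. apply restr_out. auto.
  - intro p. destruct (in_dec pos_eq_dec p A') as [H|H].
    + rewrite restr_at; auto. destruct (g p); auto. rewrite restr_out; auto. apply inA' in H. tauto.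
    + rewrite restr_out; auto. destruct (in_dec pos_eq_dec p Bm) as [H'|H'].
      * rewrite restr_at; auto.
      * rewrite restr_out; auto. destruct (g p) eqn:E; auto. exfalso. apply H. apply inA'.
        split; auto. apply inV. congruence.
  -
    assert (Hto : forall u, In u A' -> reach str g A' u r).
    { assert (HA_r : forall u, In u A -> reach str g A' u r).
      { intros u Hu. apply reach_sym. apply inA in Hu. eapply reach_restrict. apply AA', rA. apply Hu.
        intros w Hw HwL. apply AA'. apply inA. split; auto. apply inL; auto. }
      intros u Hu. destruct (classic (In u A)) as [HuA|HuA]; auto.
      apply inA' in Hu. destruct Hu as [HuV HuBm].
      assert (HuB : In u B) by (apply inB; auto).
      pose proof (Hconn u r (proj1 (inV u) HuV) (proj1 (inV r) rV)) as Hpath.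
      destruct (exit_lemma _ (reach str g B u) _ _ Hpath) as (z&w'&Hz&Hw'&Hb).
      { apply rt_refl. }
      { intro Hr'. apply (reach_in _ _ _ _ _ Hr') in HuB. apply inB in HuB. tauto. }
      assert (Hcond : forall w, reach str g B u w -> In w B -> In w A').
      { intros w Hw HwB. apply inA'. split. apply inB; auto. intro HwBm. apply HuBm.
        apply inBm in HwBm. destruct HwBm as (?&?&H3). apply inBm. split; auto. split; auto.
        eapply rt_trans. apply H3. apply reach_sym; auto. }
      assert (HzB : In z B) by (eapply reach_in; eauto).
      assert (Hw'V : In w' V) by (apply (bV _ _ Hb)).
      assert (Hw'A : In w' A).
      { apply NNPP. intro Hn. apply Hw'. eapply rt_trans. apply Hz. apply rt_step.
        split; auto. split; auto. apply inB; auto. }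
      eapply rt_trans. eapply reach_restrict. apply inA'; split; auto. apply Hz. apply Hcond.
      apply rt_trans with w'. apply rt_step. split. apply Hcond; auto. split. apply AA'; auto. apply Hb.
      apply HA_r; auto. }
    intros p q Hp Hq.
    assert (Hp' : In p A') by (destruct (in_dec pos_eq_dec p A'); auto; rewrite restr_out in Hp; tauto).
    assert (Hq' : In q A') by (destruct (in_dec pos_eq_dec q A'); auto; rewrite restr_out in Hq; tauto).
    apply reach_restr. eapply rt_trans. apply Hto; auto. apply reach_sym. apply Hto; auto.
  -
    intros p q Hp Hq.
    assert (Hp' : In p Bm) by (destruct (in_dec pos_eq_dec p Bm); auto; rewrite restr_out in Hp; tauto).
    assert (Hq' : In q Bm) by (destruct (in_dec pos_eq_dec q Bm); auto; rewrite restr_out in Hq; tauto).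
    apply reach_restr. pose proof Hp' as Hp2. pose proof Hq' as Hq2.
    apply inBm in Hp2, Hq2. destruct Hp2 as (_&_&Hp2). destruct Hq2 as (_&_&Hq2).
    eapply reach_restrict. apply Hp'. eapply rt_trans. apply reach_sym, Hp2. apply Hq2.
    intros w Hw HwB. apply inBm. split. apply inB; auto. split; auto.
    eapply rt_trans. apply Hp2. auto.
  - exists A', Bm.
    assert (LBm : (n < length Bm)%nat) by exact HBm.
    split; [|split; [|split; [|split]]].
    + split. unfold A'; apply NoDup_filter; auto. intro p. split.
      * intro Hp. rewrite restr_at; auto. apply inV. apply inA'; auto.
      * intro Hp. destruct (in_dec pos_eq_dec p A'); auto. rewrite restr_out in Hp; tauto.
    + split. unfold Bm, comp; apply NoDup_filter; auto. intro p. split.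
      * intro Hp. rewrite restr_at; auto. apply inV. apply inBm; auto.
      * intro Hp. destruct (in_dec pos_eq_dec p Bm); auto. rewrite restr_out in Hp; tauto.
    + destruct (len_in A' n LA') as [z Hz]. intro E; rewrite E in Hz; contradiction.
    + destruct (len_in Bm n LBm) as [z Hz]. intro E; rewrite E in Hz; contradiction.
    + assert (Hcut : (cut_str str g A' Bm <= h * (2 * gmax str T))%nat).
      { unfold cut_str. replace h with (length (col x y j h)) by apply length_col.
        apply sum_support. unfold A'; apply NoDup_filter; auto.
        - intros p Hp. replace (2 * gmax str T)%nat with (1 * (2 * gmax str T))%nat by lia.
          change 1%nat with (length [(fst p + 1, snd p)]).
          apply sum_support. unfold Bm, comp; apply NoDup_filter; auto.
          + intros; apply bond_le; auto.
          + intros q Hq Hb. left. symmetry. apply (key p q); auto. unfold bonded. lia.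
        - intros p Hp Hs. destruct (sum_nonzero _ _ Hs) as [q [Hq Hb]].
          apply (key p q); auto. unfold bonded. lia. }
      pose proof (Hnd n (Nat.min (length A') (length Bm)) ltac:(lia)). nia.
Qed.

Theorem theorem2 (str : nat -> nat) (T : list tiletype) (c : nat)
  (tau : nat -> nat -> nat) (k h : nat -> nat) :
  (forall i, nondecreasing (tau i)) ->
  (forall i, self_assembles_rect str T (tau i) (k i) (h i)) ->
  (forall i, (h i <= c)%nat) ->
  (forall i j, i <> j -> k i <> k j) ->
  exists C : nat, forall n f_n, is_min_value (fun i => tau i n) f_n -> (f_n <= C)%nat.
Proof.
  intros Hnd Hsa Hh Hk. exists (c * (2 * gmax str T))%nat.
  intros n f_n [_ Hmin].
  destruct (inj_unbounded k Hk (2 * n + 2)) as [i Hi].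
  specialize (Hmin i). simpl in Hmin.
  destruct (le_lt_dec (tau i n) (c * (2 * gmax str T))) as [Hle|Hlt]; [lia|exfalso].
  destruct (Hsa i) as (x & y & Hterm & g & Hg).
  destruct (Hterm g Hg) as (v & g' & Htr & Hdom).
  destruct Hg as (Hprod & Hnocomb & Hnobreak).
  assert (Hprod' : producible str T (tau i) g') by (eapply P_trans; eauto).
  pose proof (prod_tiles _ _ _ _ Hprod') as HT.
  destruct (prod_nonempty _ _ _ _ Hprod') as [p Hp].
  assert (Hrp : rect x y (k i) (h i) p) by (apply Hdom; auto).
  destruct (g' p) as [t0|] eqn:Ep; [|congruence].
  assert (Ht0 : In t0 T) by (eapply HT; eauto).
  assert (Ht1 : (0 < tau i 1%nat)%nat).
  { destruct (Nat.eq_dec (tau i 1%nat) 0%nat) as [E|E]; [exfalso|lia].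
    set (p0 := (x, y)).
    set (b := fun q => if pos_eqb q p0 then Some t0 else None).
    set (gg := fun q => match g' q with Some t => Some t | None => b q end).
    assert (Hp0 : g' p0 = None).
    { destruct (g' p0) eqn:E0; auto. assert (rect x y (k i) (h i) p0) by (apply Hdom; congruence).
      unfold rect, p0 in H; simpl in H. lia. }
    apply (Hnocomb v g' Htr b (P_tile _ _ _ t0 p0 b Ht0 (fun q => eq_refl)) gg).
    split; [|split].
    - intro q. unfold b. destruct (pos_eqb q p0) eqn:Eq; auto. left. apply pos_eqb_spec in Eq. subst; auto.
    - intro q. reflexivity.
    - exists (rect_list x y (k i) (h i)), [p0]. split; [|split].
      + apply dom_rect. auto.
      + split. repeat constructor; simpl; auto. intro q. unfold b. simpl.
        destruct (pos_eqb q p0) eqn:Eq.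
        * apply pos_eqb_spec in Eq. split; [discriminate|auto].
        * split; [intros [H|[]]; subst; rewrite (proj2 (pos_eqb_spec p0 p0) eq_refl) in Eq; discriminate
                 | intros H; congruence].
      + pose proof (Hnd i (Nat.min (length (rect_list x y (k i) (h i))) (length [p0])) 1%nat).
        simpl length in H. change (length [p0]) with 1%nat. lia. }
  pose proof (prod_conn _ _ _ _ (Hnd i) Ht1 Hprod') as Hconn.
  assert (Hh1 : (1 <= h i <= c)%nat) by (specialize (Hh i); unfold rect in Hrp; lia).
  destruct (main_break str T (tau i) g' x y (k i) (h i) n c Hdom Hconn HT Hh1 Hi (Hnd i) Hlt)
    as (a & b & Hbr).
  apply (Hnobreak v g' Htr a b Hbr).
Qed.
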